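(* Let $\mathcal{T}_0$ be a triangulation of a finite point set $\mathcal{P}$ in the plane and let $F=\langle f_1,\ldots,f_r\rangle$ be a valid sequence of flips with $\mathcal{T}_0 \xrightarrow{F} \mathcal{T}_r$. Let $\pi(F)$ be a permutation of the flips in $F$ that is a topological sorting of the DAG $\mathcal{D}_F$. Then $\pi(F)$ is a valid sequence of flips with respect to $\mathcal{T}_0$ and $\mathcal{T}_0 \xrightarrow{\pi(F)} \mathcal{T}_r$.
   Context: A triangulation of a finite point set $\mathcal{P}$ in the plane is a partition of the convex hull of $\mathcal{P}$ into triangles whose vertex set is $\mathcal{P}$. For an interior edge $e$ of a triangulation $\mathcal{T}$, the quadrilateral associated with $e$ is the union of the two triangles of $\mathcal{T}$ sharing $e$. A flip $f$ with underlying edge $\epsilon(f)=e$ is admissible in $\mathcal{T}$ if $e\in\mathcal{T}$ and its associated quadrilateral is convex; performing it replaces $e$ by the other diagonal $\phi(f)$ of that quadrilateral. Two distinct edges share a triangle in $\mathcal{T}$ if they are edges of the same triangle of $\mathcal{T}$. A sequence $F=\langle f_1,\ldots,f_r\rangle$ is valid with respect to $\mathcal{T}$ if there are triangulations $\mathcal{T}_0=\mathcal{T},\mathcal{T}_1,\ldots,\mathcal{T}_r$ such that $f_i$ is admissible in $\mathcal{T}_{i-1}$ and performing it yields $\mathcal{T}_i$; then we write $\mathcal{T}\xrightarrow{F}\mathcal{T}_r$. Flips in a sequence are distinct objects even if they have the same underlying edge. For $1\le i<j\le r$, flip $f_j$ is adjacent to $f_i$ (written $f_i\to f_j$) if (1)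 either $\phi(f_i)=\epsilon(f_j)$ or $\phi(f_i)$ and $\epsilon(f_j)$ share a triangle in $\mathcal{T}_{j-1}$, and (2) there is no $p$ with $i<p<j$ and $\epsilon(f_p)=\phi(f_i)$. $\mathcal{D}_F$ is the directed acyclic graph whose nodes are the flips of $F$ and whose arcs are the pairs $f_i\to f_j$. *)

(* Defs.v *)
(* Points of P are indexed by 'I_n via an injective map p. *)
From HB Require Import structures.
From mathcomp Require Import all_boot all_order all_algebra all_fingroup.
Set Implicit Arguments. Unset Strict Implicit. Unset Printing Implicit Defensive.
Import Order.TTheory GRing.Theory Num.Theory.
Local Open Scope ring_scope.

Section Triang.
Variables (R : realFieldType) (n : nat) (p : 'I_n -> R * R).

Definition orient (a b c : 'I_n) : R :=
  ((p b).1 - (p a).1) * ((p c).2 - (p a).2) - ((p b).2 - (p a).2) * ((p c).1 - (p a).1).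

Definition in_conv (S : {set 'I_n}) (x : R * R) : Prop :=
  exists w : 'I_n -> R,
    [/\ forall i, 0 <= w i, forall i, i \notin S -> w i = 0,
        \sum_i w i = 1 &
        x = (\sum_i w i * (p i).1, \sum_i w i * (p i).2)].

Definition is_triangle (t : {set 'I_n}) : Prop :=
  exists a b c, t = [set a; b; c] /\ orient a b c != 0.

(* T is a triangulation of P: triangles with vertices in P covering conv(P),
   meeting pairwise in a common face (possibly empty), and every point of P
   is a vertex. *)
Definition is_triangulation (T : {set {set 'I_n}}) : Prop :=
  [/\ forall t, t \in T -> is_triangle t,
      forall x, in_conv setT x <-> exists2 t, t \in T & in_conv t x,
      forall t1 t2, t1 \in T -> t2 \in T -> forall x,
        (in_conv t1 x /\ in_conv t2 x) <-> in_conv (t1 :&: t2) x &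
      forall i, exists2 t, t \in T & i \in t].

(* strictly convex quadrilateral with diagonals ab and cd *)
Definition convex_quad (a b c d : 'I_n) : Prop :=
  orient a b c * orient a b d < 0 /\ orient c d a * orient c d b < 0.

End Triang.

(* A flip is a pair (underlying edge eps, new diagonal phi). *)
Definition flip (n : nat) := ({set 'I_n} * {set 'I_n})%type.
Definition eps n (f : flip n) := f.1.
Definition phi n (f : flip n) := f.2.

Definition admissible (R : realFieldType) n (p : 'I_n -> R * R)
  (T : {set {set 'I_n}}) (f : flip n) : Prop :=
  exists a b c d,
    [/\ eps f = [set a; b], [set a; b; c] \in T, [set a; b; d] \in T,
        phi f = [set c; d] & convex_quad p a b c d].

Definition perform n (T : {set {set 'I_n}}) (f : flip n) : {set {set 'I_n}} :=
  (T :\: [set t in T | eps f \subset t])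
    :|: [set phi f :|: [set a] | a in eps f].

Definition after n (T : {set {set 'I_n}}) (F : seq (flip n)) (k : nat) :=
  foldl (@perform n) T (take k F).

Definition f0 n : flip n := (set0, set0).

Definition valid (R : realFieldType) n (p : 'I_n -> R * R)
  (T : {set {set 'I_n}}) (F : seq (flip n)) : Prop :=
  forall k, (k < size F)%N ->
    admissible p (after T F k) (nth (f0 n) F k) /\
    is_triangulation p (after T F k.+1).

Definition share_tri n (T : {set {set 'I_n}}) (e1 e2 : {set 'I_n}) : Prop :=
  [/\ e1 != e2, #|e1| = 2%N, #|e2| = 2%N &
      exists2 t, t \in T & e1 \subset t /\ e2 \subset t].

(* arc f_i -> f_j of D_F (0-based positions); T_{j-1} in 1-based indexing
   is the triangulation after the first j (0-based) flips *)
Definition arc n (T : {set {set 'I_n}}) (F : seq (flip n)) (i j : nat) : Prop :=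
  [/\ (i < j)%N, (j < size F)%N,
      phi (nth (f0 n) F i) = eps (nth (f0 n) F j)
      \/ share_tri (after T F j) (phi (nth (f0 n) F i)) (eps (nth (f0 n) F j)) &
      forall q, (i < q)%N -> (q < j)%N ->
        eps (nth (f0 n) F q) != phi (nth (f0 n) F i)].

Definition permuted n (F : seq (flip n)) (s : {perm 'I_(size F)}) : seq (flip n) :=
  [seq nth (f0 n) F (s k) | k <- enum 'I_(size F)].

(* s is a topological sorting of D_F: every arc goes forward in the new order *)
Definition topo_sort n (T : {set {set 'I_n}}) (F : seq (flip n))
  (s : {perm 'I_(size F)}) : Prop :=
  forall i j : 'I_(size F), arc T F i j -> ((s^-1)%g i < (s^-1)%g j)%N.
Arguments permuted {n} F s.
Arguments topo_sort {n} T F s.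

(* Main.v *)
Require Import Defs.
From mathcomp Require Import all_boot all_order all_algebra all_fingroup.
From HB Require Import structures.
From mathcomp Require Import ring lra zify.
Set Implicit Arguments. Unset Strict Implicit. Unset Printing Implicit Defensive.
Import Order.TTheory GRing.Theory Num.Theory.


Open Scope ring_scope.


Section Geo.
Variables (R : realFieldType) (n : nat) (p : 'I_n -> R * R).

Definition ori (P Q X : R * R) : R :=
  (Q.1 - P.1) * (X.2 - P.2) - (Q.2 - P.2) * (X.1 - P.1).

Lemma orientE a b c : orient p a b c = ori (p a) (p b) (p c).
Proof. by []. Qed.

Definition comb3 (al be ga : R) (u v w : R * R) : R * R :=
  (al * u.1 + be * v.1 + ga * w.1, al * u.2 + be * v.2 + ga * w.2).

Lemma sum_ind (u : 'I_n) (c : R) : \sum_i ((i == u)%:R * c) = c.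
Proof.
rewrite (bigD1 u) //= eqxx mul1r big1 ?addr0 // => i /negbTE ->.
by rewrite mul0r.
Qed.

Lemma sum3 (G : 'I_n -> R) u v w : u != v -> u != w -> v != w ->
  (forall i, i \notin [set u; v; w] -> G i = 0) ->
  \sum_i G i = G u + G v + G w.
Proof.
move=> uv uw vw H.
rewrite (eq_bigr (fun i => (i == u)%:R * G u + (i == v)%:R * G v + (i == w)%:R * G w)).
  by rewrite !big_split /= !sum_ind.
move=> i _.
case: (eqVneq i u) => [->|iu]; first by rewrite (negbTE uv) (negbTE uw) /=; ring.
case: (eqVneq i v) => [->|iv]; first by rewrite (negbTE vw) /=; ring.
case: (eqVneq i w) => [->|iw]; first by rewrite /=; ring.
rewrite H; first by rewrite /=; ring.
by rewrite !inE (negbTE iu) (negbTE iv) (negbTE iw).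
Qed.

Lemma conv3P (S : {set 'I_n}) (u v w : 'I_n) (x : R * R) : u != v -> u != w -> v != w ->
  S \subset [set u; v; w] -> in_conv p S x ->
  exists al be ga, [/\ 0 <= al, 0 <= be, 0 <= ga & al + be + ga = 1] /\
     [/\ u \notin S -> al = 0, v \notin S -> be = 0 & w \notin S -> ga = 0] /\
     x = comb3 al be ga (p u) (p v) (p w).
Proof.
move=> uv uw vw sS [W [W0 WS W1 ->]].
have Hz : forall i, i \notin [set u; v; w] -> W i = 0.
  by move=> i iS; apply: WS; apply: contra iS; apply: (subsetP sS).
exists (W u), (W v), (W w); split; [|split].
- by split => //; rewrite -W1 (sum3 uv uw vw).
- by split; apply: WS.
rewrite /comb3 (sum3 (G := fun i => W i * (p i).1) uv uw vw).
  rewrite (sum3 (G := fun i => W i * (p i).2) uv uw vw) //.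
  by move=> i /Hz ->; rewrite mul0r.
by move=> i /Hz ->; rewrite mul0r.
Qed.

Lemma conv3I (S : {set 'I_n}) (u v w : 'I_n) (x : R * R) (al be ga : R) : u != v -> u != w -> v != w ->
  0 <= al -> 0 <= be -> 0 <= ga -> al + be + ga = 1 ->
  (u \notin S -> al = 0) -> (v \notin S -> be = 0) -> (w \notin S -> ga = 0) ->
  x = comb3 al be ga (p u) (p v) (p w) -> in_conv p S x.
Proof.
move=> uv uw vw a0 b0 g0 s1 Su Sv Sw ->.
pose W i := (i == u)%:R * al + (i == v)%:R * be + (i == w)%:R * ga.
have Wu : W u = al by rewrite /W eqxx (negbTE uv) (negbTE uw) /=; ring.
have Wv : W v = be by rewrite /W eqxx eq_sym (negbTE uv) (negbTE vw) /=; ring.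
have Ww : W w = ga by rewrite /W eqxx eq_sym (negbTE uw) eq_sym (negbTE vw) /=; ring.
have Wz : forall i, i \notin [set u; v; w] -> W i = 0.
  move=> i; rewrite !inE => /norP [/norP [/negbTE h1 /negbTE h2] /negbTE h3].
  by rewrite /W h1 h2 h3 /=; ring.
exists W; split.
- by move=> i; rewrite /W !addr_ge0 // mulr_ge0 // ler0n.
- move=> i iS.
  case: (eqVneq i u) => [eiu|iu]; first by rewrite eiu Wu; apply: Su; rewrite -eiu.
  case: (eqVneq i v) => [eiv|iv]; first by rewrite eiv Wv; apply: Sv; rewrite -eiv.
  case: (eqVneq i w) => [eiw|iw]; first by rewrite eiw Ww; apply: Sw; rewrite -eiw.
  by apply: Wz; rewrite !inE (negbTE iu) (negbTE iv) (negbTE iw).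
- by rewrite (sum3 uv uw vw Wz) Wu Wv Ww.
rewrite /comb3 (sum3 (G := fun i => W i * (p i).1) uv uw vw); last first.
  by move=> i /Wz ->; rewrite mul0r.
rewrite (sum3 (G := fun i => W i * (p i).2) uv uw vw); last first.
  by move=> i /Wz ->; rewrite mul0r.
by rewrite Wu Wv Ww.
Qed.

Lemma conv_sub (S S' : {set 'I_n}) (x : R * R) : S \subset S' -> in_conv p S x -> in_conv p S' x.
Proof.
move=> sS [W [W0 WS W1 E]]; exists W; split => // i iS.
by apply: WS; apply: contra iS; apply: (subsetP sS).
Qed.

Lemma ori_comb P Q al be ga u v w : al + be + ga = 1 ->
  ori P Q (comb3 al be ga u v w) = al * ori P Q u + be * ori P Q v + ga * ori P Q w.
Proof.
move=> s1; have -> : ga = 1 - al - be by rewrite -s1; ring.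
by rewrite /ori /comb3 /=; ring.
Qed.

Lemma ori_cyc P Q X : ori P Q X = ori Q X P.
Proof. by rewrite /ori; ring. Qed.

Lemma ori_swap P Q X : ori P Q X = - ori Q P X.
Proof. by rewrite /ori; ring. Qed.

Lemma ori_degen P X : ori P P X = 0.
Proof. by rewrite /ori; ring. Qed.

Lemma ori_degen2 P X : ori P X P = 0.
Proof. by rewrite /ori; ring. Qed.

Lemma ori_neq a b c : orient p a b c != 0 -> [/\ a != b, a != c & b != c].
Proof.
rewrite orientE => H; split; apply/eqP => E; move: H; rewrite E.
- by rewrite ori_degen eqxx.
- by rewrite ori_degen2 eqxx.
- by rewrite ori_cyc ori_degen eqxx.
Qed.

Lemma cramer (U V W X : R * R) : ori U V W != 0 ->
  X = comb3 (ori X V W / ori U V W) (ori U X W / ori U V W) (ori U V X / ori U V W) U V W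
  /\ ori X V W / ori U V W + ori U X W / ori U V W + ori U V X / ori U V W = 1.
Proof.
move=> o0; split.
  case: X => x1 x2; rewrite /comb3 /ori /=; congr (_, _); field; exact: o0.
by rewrite /ori; field; exact: o0.
Qed.

Lemma divr_ge0' (a o : R) : o != 0 -> 0 <= a * o -> 0 <= a / o.
Proof.
move=> o0 H; have -> : a / o = (a * o) / (o * o) by field.
by apply: divr_ge0 => //; rewrite -expr2 sqr_ge0.
Qed.

Lemma in_tri (u v w : 'I_n) (x : R * R) : orient p u v w != 0 ->
  0 <= ori x (p v) (p w) * orient p u v w ->
  0 <= ori (p u) x (p w) * orient p u v w ->
  0 <= ori (p u) (p v) x * orient p u v w ->
  in_conv p [set u; v; w] x.
Proof.
move=> o0 h1 h2 h3; have [uv uw vw] := ori_neq o0.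
move: o0 h1 h2 h3; rewrite orientE => o0 h1 h2 h3.
have [E S] := cramer x o0.
apply: (conv3I uv uw vw _ _ _ S) E; try (by apply: divr_ge0');
  by rewrite !inE eqxx ?orbT.
Qed.

End Geo.


Section Geo2.
Variables (R : realFieldType) (n : nat) (p : 'I_n -> R * R).

Lemma in3 (x a b c : 'I_n) : x \in [set a; b; c] -> [\/ x = a, x = b | x = c].
Proof. by rewrite !inE => /orP[/orP[]|] /eqP ->; [apply: Or31|apply: Or32|apply: Or33]. Qed.

Lemma tri_ori a b c : is_triangle p [set a; b; c] -> orient p a b c != 0.
Proof.
move=> [a' [b' [c' [E o]]]].
have [h1 h2 h3] := ori_neq o.
have Ha : a' \in [set a; b; c] by rewrite E !inE eqxx.
have Hb : b' \in [set a; b; c] by rewrite E !inE eqxx ?orbT.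
have Hc : c' \in [set a; b; c] by rewrite E !inE eqxx ?orbT.
move: o h1 h2 h3.
case: (in3 Ha) => ->; case: (in3 Hb) => ->; case: (in3 Hc) => ->;
  rewrite ?eqxx // !orientE /ori => o _ _ _; move: o; apply: contra => /eqP H;
  apply/eqP; lra.
Qed.

Lemma tri_of (t : {set 'I_n}) a b z : is_triangle p t -> t = [set a; b; z] ->
  exists z, t = [set a; b; z] /\ orient p a b z != 0.
Proof. by move=> Ht E; exists z; split => //; apply: tri_ori; rewrite -E. Qed.

Ltac seteq := apply/setP => ?; rewrite !inE; by do 3! (case: eqP => _).

Lemma tri3 (t : {set 'I_n}) a b : is_triangle p t -> a \in t -> b \in t -> a != b ->
  exists z, t = [set a; b; z] /\ orient p a b z != 0.
Proof.
move=> Ht; have := Ht; case=> [a' [b' [c' [E o]]]].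
rewrite E in Ht * => Ha Hb ab.
case: (in3 Ha) => ?; case: (in3 Hb) => ?; subst; rewrite ?eqxx // in ab;
first [ apply: (tri_of (z := a') Ht); seteq
      | apply: (tri_of (z := b') Ht); seteq
      | apply: (tri_of (z := c') Ht); seteq ].
Qed.

Lemma negle_norm (k : R) : - k <= `|k|.
Proof. by have := ler_norm (- k); rewrite normrN. Qed.

Lemma opp (T : {set {set 'I_n}}) a b u v : is_triangulation p T ->
  [set a; b; u] \in T -> [set a; b; v] \in T -> u != v ->
  orient p a b u * orient p a b v < 0.
Proof.
case=> [Htri _ Hint _] Hu Hv uv.
have ou := tri_ori (Htri _ Hu); have ov := tri_ori (Htri _ Hv).
have [ab au bu] := ori_neq ou; have [_ av bv] := ori_neq ov.
rewrite ltNge; apply/negP => Hpos.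
move: ou ov Hpos; rewrite !orientE => ou ov Hpos.
set Ou := ori (p a) (p b) (p u) in ou Hpos *.
set Ov := ori (p a) (p b) (p v) in ov Hpos *.
set K1 := ori (p b) (p v) (p u).
set K2 := ori (p v) (p a) (p u).
set A := `|K1 * Ov| + `|K2 * Ov| + 1.
set G := Ov ^+ 2.
have G0 : 0 < G by rewrite /G lt_def sqr_ge0 andbT sqrf_eq0.
have A0 : 0 < A by have := normr_ge0 (K1 * Ov); have := normr_ge0 (K2 * Ov); rewrite /A; lra.
set S := A + A + G.
have S0 : 0 < S by rewrite /S; lra.
have S0' : S != 0 by rewrite gt_eqF.
set x := comb3 (A / S) (A / S) (G / S) (p a) (p b) (p u).
have sum1 : A / S + A / S + G / S = 1 by rewrite /S; field.
have Xu : in_conv p [set a; b; u] x.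
  apply: (conv3I ab au bu _ _ _ sum1) => //; try (by rewrite divr_ge0 // ltW);
  by rewrite !inE eqxx ?orbT.
have Xv : in_conv p [set a; b; v] x.
  apply: in_tri; rewrite orientE -/Ov; first exact: ov.
  - have -> : ori x (p b) (p v) * Ov = Ov ^+ 2 * (A + K1 * Ov) / S.
      rewrite /x /S /K1 /G /Ov /comb3 /ori /=; field; exact: S0'.
    apply: divr_ge0; last exact: ltW.
    apply: mulr_ge0; first by rewrite sqr_ge0.
    have := negle_norm (K1 * Ov); have := normr_ge0 (K2 * Ov); rewrite /A; lra.
  - have -> : ori (p a) x (p v) * Ov = Ov ^+ 2 * (A + K2 * Ov) / S.
      rewrite /x /S /K2 /G /Ov /comb3 /ori /=; field; exact: S0'.
    apply: divr_ge0; last exact: ltW.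
    apply: mulr_ge0; first by rewrite sqr_ge0.
    have := negle_norm (K2 * Ov); have := normr_ge0 (K1 * Ov); rewrite /A; lra.
  - have -> : ori (p a) (p b) x * Ov = G * (Ou * Ov) / S.
      rewrite /x /S /Ou /G /Ov /comb3 /ori /=; field; exact: S0'.
    by apply: divr_ge0; [apply: mulr_ge0; [exact: ltW|] | exact: ltW].
have := (Hint _ _ Hu Hv x).1 (conj Xu Xv).
have sub : [set a; b; u] :&: [set a; b; v] \subset [set a; b; u] by apply: subsetIl.
move=> /(conv3P ab au bu sub) [al [be [ga [H1 [H2 E]]]]].
case: H1 => _ _ _ s1; case: H2 => _ _ hu.
have unot : u \notin [set a; b; u] :&: [set a; b; v].
  have ua : (u == a) = false by rewrite eq_sym (negbTE au).
  have ub : (u == b) = false by rewrite eq_sym (negbTE bu).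
  by rewrite !inE ua ub (negbTE uv) andbF.
have ga0 := hu unot.
have H1 : ori (p a) (p b) x = 0.
  by rewrite E ori_comb // ga0 /ori; ring.
have H2 : ori (p a) (p b) x = G * Ou / S.
  rewrite /x /S /Ou /G /Ov /comb3 /ori /=; field; exact: S0'.
move: H1; rewrite H2 => /eqP; rewrite !mulf_eq0 invr_eq0 (negbTE S0') (negbTE ou) orbF.
by rewrite (negbTE ov).
Qed.

Lemma three_neg (x y z : R) : x * y < 0 -> x * z < 0 -> y * z < 0 -> False.
Proof. move=> h1 h2 h3; nra. Qed.

Lemma abtri (T : {set {set 'I_n}}) a b c d t : is_triangulation p T ->
  [set a; b; c] \in T -> [set a; b; d] \in T -> c != d -> t \in T -> a \in t -> b \in t ->
  t = [set a; b; c] \/ t = [set a; b; d].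
Proof.
move=> HT Hc Hd cd Ht at_ bt.
have HT' := HT; case: HT' => [Htri _ _ _].
have [ab _ _] := ori_neq (tri_ori (Htri _ Hc)).
have [z [E oz]] := tri3 (Htri _ Ht) at_ bt ab.
case: (eqVneq z c) => [zc|zc]; first by left; rewrite E zc.
case: (eqVneq z d) => [zd|zd]; first by right; rewrite E zd.
rewrite E in Ht.
have zc' : c != z by rewrite eq_sym.
have zd' : d != z by rewrite eq_sym.
have h1 := opp HT Hc Hd cd.
have h2 := opp HT Hc Ht (zc' : c != z).
have h3 := opp HT Hd Ht (zd' : d != z).
by case: (three_neg h1 h2 h3).
Qed.

Lemma div_pos (x y : R) : 0 < x * y -> 0 < x / y.
Proof.
move=> H; have y0 : y != 0 by apply/eqP => e; move: H; rewrite e mulr0 ltxx.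
have -> : x / y = (x * y) / (y * y) by field.
by apply: divr_gt0 => //; rewrite lt_def sqr_ge0 andbT -expr2 sqrf_eq0 ?y0.
Qed.

Lemma comb3_0 (al be : R) (u v w w' : R * R) : comb3 al be 0 u v w = comb3 al be 0 u v w'.
Proof. by rewrite /comb3 !mul0r. Qed.

Lemma quadP a b c d : convex_quad p a b c d ->
  [/\ orient p a b c != 0, orient p a b d != 0, orient p c d a != 0 & orient p c d b != 0].
Proof.
case=> h1 h2; split; apply/eqP => e.
- by move: h1; rewrite e mul0r ltxx.
- by move: h1; rewrite e mulr0 ltxx.
- by move: h2; rewrite e mul0r ltxx.
- by move: h2; rewrite e mulr0 ltxx.
Qed.

Lemma cross a b c d : convex_quad p a b c d ->
  exists mu nu, [/\ 0 < mu, 0 < 1 - mu, 0 < nu, 0 < 1 - nu &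
     comb3 mu (1 - mu) 0 (p c) (p d) (p c) = comb3 nu (1 - nu) 0 (p a) (p b) (p a)].
Proof.
move=> q; have [oc od ea eb] := quadP q; case: q; rewrite !orientE.
move: oc od ea eb; rewrite !orientE.
set Oc := ori (p a) (p b) (p c); set Od := ori (p a) (p b) (p d).
set Ea := ori (p c) (p d) (p a); set Eb := ori (p c) (p d) (p b).
move=> oc od ea eb h1 h2.
have d1 : Od - Oc != 0.
  apply/eqP => e; have e' : Od = Oc by lra.
  move: h1; rewrite e' -expr2 => h; have := sqr_ge0 Oc; lra.
have d2 : Eb - Ea != 0.
  apply/eqP => e; have e' : Eb = Ea by lra.
  move: h2; rewrite e' -expr2 => h; have := sqr_ge0 Ea; lra.
exists (Od / (Od - Oc)), (Eb / (Eb - Ea)); split.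
- by apply: div_pos; nra.
- have -> : 1 - Od / (Od - Oc) = (- Oc) / (Od - Oc) by field.
  by apply: div_pos; nra.
- by apply: div_pos; nra.
- have -> : 1 - Eb / (Eb - Ea) = (- Ea) / (Eb - Ea) by field.
  by apply: div_pos; nra.
rewrite /comb3 /Oc /Od /Ea /Eb /ori /=; congr (_, _); field.
  by apply/andP; split; [exact: d2 | exact: d1].
by apply/andP; split; [exact: d2 | exact: d1].
Qed.

End Geo2.


Section Geo3.
Variables (R : realFieldType) (n : nat) (p : 'I_n -> R * R).

Lemma noCD (T : {set {set 'I_n}}) a b c d t : is_triangulation p T ->
  [set a; b; c] \in T -> convex_quad p a b c d -> t \in T -> c \in t -> d \in t -> False.
Proof.
move=> HT Habc q Ht ct dt.
have [Htri _ Hint _] := HT.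
have [oc od ea eb] := quadP q.
have [ab ac bc] := ori_neq oc; have [_ ad bd] := ori_neq od; have [cd ca da] := ori_neq ea.
have [x [E ox]] := tri3 (Htri _ Ht) ct dt cd.
have [_ cx dx] := ori_neq ox.
have [mu [nu [m0 m1 n0 n1 Eq]]] := cross q.
set Q := comb3 nu (1 - nu) 0 (p a) (p b) (p c).
have EQ2 : Q = comb3 mu (1 - mu) 0 (p c) (p d) (p x).
  by rewrite /Q (comb3_0 _ _ _ _ _ (p a)) -Eq (comb3_0 _ _ _ _ _ (p x)).
have Q1 : in_conv p [set a; b; c] Q.
  apply: (conv3I ab ac bc (al := nu) (be := 1 - nu) (ga := 0)) => //;
   try (by rewrite ltW); try (by rewrite !inE eqxx ?orbT); by ring.
have Q2 : in_conv p t Q.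
  rewrite E EQ2; apply: (conv3I cd cx dx (al := mu) (be := 1 - mu) (ga := 0)) => //;
   try (by rewrite ltW); try (by rewrite !inE eqxx ?orbT); by ring.
have := (Hint _ _ Ht Habc Q).1 (conj Q2 Q1).
have sub : t :&: [set a; b; c] \subset [set a; b; c] by apply: subsetIr.
move=> /(conv3P ab ac bc sub) [al [be [ga [H1 [H2 EQ]]]]].
case: H1 => a0 b0 g0 s1; case: H2 => ha hb hc.
have O1 : ori (p a) (p b) Q = 0.
  by rewrite /Q ori_comb /ori; ring.
have O2 : ori (p a) (p b) Q = ga * orient p a b c.
  by rewrite EQ ori_comb // orientE /ori; ring.
have ga0 : ga = 0.
  by move: O2; rewrite O1 => /esym/eqP; rewrite mulf_eq0 (negbTE oc) orbF => /eqP.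
have O3 : ori (p c) (p d) Q = 0.
  by rewrite EQ2 ori_comb /ori; ring.
have O4 : ori (p c) (p d) Q = al * orient p c d a + be * orient p c d b.
  by rewrite EQ ori_comb // ga0 !orientE /ori; ring.
have notab : (a \notin t :&: [set a; b; c]) || (b \notin t :&: [set a; b; c]).
  rewrite E !inE !eqxx /= !andbT -negb_and; apply/negP => /andP [].
  rewrite (negbTE ac) (negbTE ad) /= => /eqP ea'.
  by rewrite (negbTE bc) (negbTE bd) /= => /andP [/eqP e _]; move: ab; rewrite e ea' eqxx.
case/orP: notab => [/ha al0 | /hb be0].
  move/eqP: eb; apply; have : be = 1 by lra.
  by move=> e1; move: O4; rewrite O3 al0 e1; lra.
move/eqP: ea; apply; have : al = 1 by lra.
by move=> e1; move: O4; rewrite O3 be0 e1; lra.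
Qed.

Lemma eq_via (X Y A B k : R) : X - Y = k * (A - B) -> A = B -> X = Y.
Proof. by move=> h e; apply/eqP; rewrite -subr_eq0 h e subrr mulr0. Qed.

Lemma quad_split a b c d x : convex_quad p a b c d -> in_conv p [set c; d; a] x ->
  in_conv p [set a; b; c] x \/ in_conv p [set a; b; d] x.
Proof.
move=> q Hx.
have [oc od ea eb] := quadP q.
have [ab ac bc] := ori_neq oc; have [_ ad bd] := ori_neq od; have [cd ca da] := ori_neq ea.
have [mu [nu [m0 m1 n0 n1 Eq]]] := cross q.
have e1 := congr1 fst Eq; have e2 := congr1 snd Eq; rewrite /comb3 /= in e1 e2.
move: Hx => /(conv3P cd ca da (subxx _)) [al [be [ga [[a0 b0 g0 s1] [_ E]]]]].
have m1' : 1 - mu != 0 by rewrite gt_eqF.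
have m0' : mu != 0 by rewrite gt_eqF.
case: (leP (be * mu) (al * (1 - mu))) => hle.
  left; set s := be / (1 - mu).
  have s0 : 0 <= s by rewrite divr_ge0 // ltW.
  apply: (conv3I ab ac bc (al := s * nu + ga) (be := s * (1 - nu)) (ga := al - s * mu));
    try (by rewrite !inE eqxx ?orbT).
  - by rewrite addr_ge0 // mulr_ge0 // ltW.
  - by rewrite mulr_ge0 // ltW.
  - have -> : al - s * mu = (al * (1 - mu) - be * mu) / (1 - mu) by rewrite /s; field.
    by apply: divr_ge0; [rewrite subr_ge0 | exact: ltW].
  - have -> : ga = 1 - al - be by lra.
    rewrite /s; field; exact: m1'.
  rewrite E /comb3; congr (_, _).
  - apply: (eq_via (k := s)) e1; rewrite /s; field; exact: m1'.
  - apply: (eq_via (k := s)) e2; rewrite /s; field; exact: m1'.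
right; set s := al / mu.
have s0 : 0 <= s by rewrite divr_ge0 // ltW.
apply: (conv3I ab ad bd (al := s * nu + ga) (be := s * (1 - nu)) (ga := be - s * (1 - mu)));
  try (by rewrite !inE eqxx ?orbT).
- by rewrite addr_ge0 // mulr_ge0 // ltW.
- by rewrite mulr_ge0 // ltW.
- have -> : be - s * (1 - mu) = (be * mu - al * (1 - mu)) / mu by rewrite /s; field.
  by apply: divr_ge0; [rewrite subr_ge0 ltW | exact: ltW].
- have -> : ga = 1 - al - be by lra.
  rewrite /s; field; exact: m0'.
rewrite E /comb3; congr (_, _).
- apply: (eq_via (k := s)) e1; rewrite /s; field; exact: m0'.
- apply: (eq_via (k := s)) e2; rewrite /s; field; exact: m0'.
Qed.

Lemma signs0 (be g ea eb : R) : 0 <= be -> 0 <= g -> ea * eb < 0 -> be * eb = g * ea -> be = 0.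
Proof.
move=> h1 h2 h3 h4.
have eb0 : eb != 0 by apply/eqP => e; move: h3; rewrite e mulr0 ltxx.
have H : be * (eb * eb) <= 0.
  rewrite mulrA h4 -mulrA; apply: mulr_ge0_le0 => //; exact: ltW.
have E2 : 0 < eb * eb by rewrite -expr2 lt_def sqr_ge0 sqrf_eq0 eb0.
set ee := eb * eb in H E2; nra.
Qed.

Lemma cut_b (S : {set 'I_n}) a b c d x : orient p c d a * orient p c d b < 0 ->
  in_conv p [set c; d; a] x -> in_conv p S x -> S \subset [set b; c; d] ->
  in_conv p (S :\ b) x.
Proof.
move=> h Hx HS sS.
have ea : orient p c d a != 0 by apply/eqP => e; move: h; rewrite e mul0r ltxx.
have eb : orient p c d b != 0 by apply/eqP => e; move: h; rewrite e mulr0 ltxx.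
have [cd ca da] := ori_neq ea; have [_ cb db] := ori_neq eb.
have bc : b != c by rewrite eq_sym. have bd : b != d by rewrite eq_sym.
move: HS => /(conv3P bc bd cd sS) [be [ga [de [H1 [H2 E]]]]].
case: H1 => b0 g0 d0 s1; case: H2 => hb hc hd.
move: Hx => /(conv3P cd ca da (subxx _)) [ga' [de' [al' [H1' [H2' E']]]]].
case: H1' => g0' d0' a0' s1'.
have O1 : ori (p c) (p d) x = be * orient p c d b.
  by rewrite E ori_comb // orientE /ori; ring.
have O2 : ori (p c) (p d) x = al' * orient p c d a.
  by rewrite E' ori_comb // orientE /ori; ring.
have be0 : be = 0.
  by apply: (signs0 b0 a0' h); rewrite -O1 -O2.
apply: (conv3I bc bd cd (al := be) (be := ga) (ga := de)) => //.
- move=> hc'; apply: hc; apply: contra hc'; rewrite !inE => ->; by rewrite eq_sym bc.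
- move=> hd'; apply: hd; apply: contra hd'; rewrite !inE => ->; by rewrite eq_sym bd.
Qed.

End Geo3.


Lemma perform_in n (T : {set {set 'I_n}}) (f : flip n) t :
  (t \in perform T f) =
  ((t \in T) && ~~ (eps f \subset t)) || (t \in [set phi f :|: [set x] | x in eps f]).
Proof.
rewrite /perform !inE; case: (t \in T) => //=; by rewrite ?andbF ?andbT.
Qed.

Lemma new_in n (f : flip n) a b c d t : eps f = [set a; b] -> phi f = [set c; d] ->
  (t \in [set phi f :|: [set x] | x in eps f]) = (t == [set c; d; a]) || (t == [set c; d; b]).
Proof.
move=> Ee Ep; rewrite Ee Ep; apply/imsetP/orP.
  by case=> x; rewrite !inE => /orP [] /eqP -> ->; [left|right].
by case=> /eqP ->; [exists a | exists b]; rewrite ?inE ?eqxx ?orbT.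
Qed.

Section Geo4.
Variables (R : realFieldType) (n : nat) (p : 'I_n -> R * R).

Lemma quad_sym a b c d : convex_quad p a b c d ->
  [/\ convex_quad p b a c d, convex_quad p a b d c & convex_quad p c d a b].
Proof.
case; rewrite /convex_quad !orientE => h1 h2.
split; split; rewrite ?orientE; try (rewrite (ori_swap (p b) (p a)) (ori_swap (p b) (p a)));
  try (rewrite (ori_swap (p d) (p c)) (ori_swap (p d) (p c))); try lra.
Qed.

Ltac in3t := by rewrite !inE eqxx ?orbT.

Lemma mixedA (T : {set {set 'I_n}}) a b c d t x : is_triangulation p T ->
  [set a; b; c] \in T -> [set a; b; d] \in T -> convex_quad p a b c d -> t \in T ->
  ~~ ((a \in t) && (b \in t)) -> in_conv p t x -> in_conv p [set c; d; a] x ->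
  in_conv p (t :&: [set c; d; a]) x.
Proof.
move=> HT Hc Hd q Ht nab Xt Xa.
have [_ _ Hint _] := HT.
have h2 : orient p c d a * orient p c d b < 0 by case: q.
have Xo := quad_split q Xa.
case: (boolP (b \in t)) => bt.
  have at_ : a \notin t by apply: contra nab => ->; rewrite bt.
  case: Xo => Xo.
    have XS := (Hint _ _ Ht Hc x).1 (conj Xt Xo).
    have sS : t :&: [set a; b; c] \subset [set b; c; d].
      apply/subsetP => z; rewrite in_setI => /andP [zt] /in3 [] ez; subst z;
        [by rewrite zt in at_ | in3t | in3t].
    apply: conv_sub (cut_b h2 Xa XS sS).
    apply/subsetP => z; rewrite in_setD1 in_setI => /andP [zb /andP [zt]] /in3 [] ez; subst z;
      [by rewrite zt in at_ | by rewrite eqxx in zb | by rewrite in_setI zt; in3t].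
  have XS := (Hint _ _ Ht Hd x).1 (conj Xt Xo).
  have sS : t :&: [set a; b; d] \subset [set b; c; d].
    apply/subsetP => z; rewrite in_setI => /andP [zt] /in3 [] ez; subst z;
      [by rewrite zt in at_ | in3t | in3t].
  apply: conv_sub (cut_b h2 Xa XS sS).
  apply/subsetP => z; rewrite in_setD1 in_setI => /andP [zb /andP [zt]] /in3 [] ez; subst z;
    [by rewrite zt in at_ | by rewrite eqxx in zb | by rewrite in_setI zt; in3t].
case: Xo => Xo.
  apply: conv_sub ((Hint _ _ Ht Hc x).1 (conj Xt Xo)).
  apply/subsetP => z; rewrite in_setI => /andP [zt] /in3 [] ez; subst z;
    [by rewrite inE zt; in3t | by rewrite zt in bt | by rewrite inE zt; in3t].
apply: conv_sub ((Hint _ _ Ht Hd x).1 (conj Xt Xo)).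
apply/subsetP => z; rewrite in_setI => /andP [zt] /in3 [] ez; subst z;
  [by rewrite inE zt; in3t | by rewrite zt in bt | by rewrite inE zt; in3t].
Qed.

Lemma sub_ab (a b : 'I_n) (t : {set 'I_n}) : ([set a; b] \subset t) = (a \in t) && (b \in t).
Proof. by rewrite subUset !sub1set. Qed.

Lemma flip_tri (T : {set {set 'I_n}}) (f : flip n) a b c d : is_triangulation p T ->
  eps f = [set a; b] -> [set a; b; c] \in T -> [set a; b; d] \in T -> phi f = [set c; d] ->
  convex_quad p a b c d -> is_triangulation p (perform T f).
Proof.
move=> HT Ee Hc Hd Ep q.
have [Htri Hcov Hint Hvert] := HT.
have [oc od ea eb] := quadP q.
have [ab ac bc] := ori_neq oc; have [_ ad bd] := ori_neq od; have [cd ca da] := ori_neq ea.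
have [qba qdc qcd] := quad_sym q.
have [qdcab _ _] := quad_sym qcd.
have Hmem : forall t, (t \in perform T f) =
    ((t \in T) && ~~ ((a \in t) && (b \in t))) || (t == [set c; d; a]) || (t == [set c; d; b]).
  by move=> t; rewrite perform_in (new_in _ Ee Ep) Ee sub_ab orbA.
have Hrem : forall t, t \in T -> (a \in t) && (b \in t) -> t = [set a; b; c] \/ t = [set a; b; d].
  by move=> t Ht /andP [at_ bt]; apply: (abtri HT Hc Hd cd Ht).
have Edc : forall z, [set d; c; z] = [set c; d; z] by move=> z; rewrite (setUC [set d]).
have Eba : forall z, [set b; a; z] = [set a; b; z] by move=> z; rewrite (setUC [set b]).
have h2 : orient p c d a * orient p c d b < 0 by case: q.
have mixed : forall t s x, t \in T -> ~~ ((a \in t) && (b \in t)) ->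
    (s == [set c; d; a]) || (s == [set c; d; b]) -> in_conv p t x -> in_conv p s x ->
    in_conv p (t :&: s) x.
  move=> t s x Ht nab /orP [] /eqP -> Xt Xs.
    exact: (mixedA HT Hc Hd q Ht nab Xt Xs).
  have Hc' : [set b; a; c] \in T by rewrite Eba.
  have Hd' : [set b; a; d] \in T by rewrite Eba.
  by apply: (mixedA HT Hc' Hd' qba Ht _ Xt Xs); rewrite andbC.
have newnew : forall x, in_conv p [set c; d; a] x -> in_conv p [set c; d; b] x ->
    in_conv p ([set c; d; a] :&: [set c; d; b]) x.
  move=> x Xa Xb.
  have sS : [set c; d; b] \subset [set b; c; d].
    by apply/subsetP => z /in3 [] ->; in3t.
  apply: conv_sub (cut_b h2 Xa Xb sS).
  apply/subsetP => z; rewrite in_setD1 => /andP [zb] /in3 [] ez; subst z;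
    [by rewrite in_setI; apply/andP; split; in3t | by rewrite in_setI; apply/andP; split; in3t
    | by rewrite eqxx in zb].
split.
- move=> t; rewrite Hmem => /orP [/orP [/andP [Ht _] | /eqP ->] | /eqP ->];
    [exact: Htri | exists c, d, a | exists c, d, b]; split => //.
- move=> x; split.
  + move/Hcov => [t Ht Xt]. case: (boolP ((a \in t) && (b \in t))) => sab.
      case: (Hrem t Ht sab) => Et; subst t.
        by case: (quad_split qcd Xt) => X; [exists [set c; d; a] | exists [set c; d; b]];
          rewrite ?Hmem ?eqxx ?orbT.
      by case: (quad_split qdcab Xt) => X; [exists [set c; d; a] | exists [set c; d; b]];
        rewrite ?Hmem ?eqxx ?orbT // -Edc.
    by exists t => //; rewrite Hmem Ht sab.
  + by case=> t _ Xt; apply: conv_sub Xt; exact: subsetT.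
- move=> t1 t2 H1 H2 x; split; last first.
    by move=> X; split; apply: conv_sub X; [exact: subsetIl | exact: subsetIr].
  case=> X1 X2.
  move: H1 H2; rewrite !Hmem -!orbA => /orP [/andP [T1 n1] | N1] /orP [/andP [T2 n2] | N2].
  + exact: ((Hint _ _ T1 T2 x).1 (conj X1 X2)).
  + exact: mixed.
  + by rewrite setIC; apply: mixed.
  + move: N1 N2 X1 X2 => /orP [] /eqP -> /orP [] /eqP -> X1 X2; rewrite ?setIid //.
      exact: newnew.
    by rewrite setIC; apply: newnew.
- move=> i; have [t Ht it] := Hvert i.
  case: (boolP ((a \in t) && (b \in t))) => sab; last first.
    by exists t => //; rewrite Hmem Ht sab.
  case: (Hrem t Ht sab) => Et; subst t; move: it => /in3 [] ->;
    first [ by exists [set c; d; a]; [rewrite Hmem eqxx ?orbT | in3t]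
          | by exists [set c; d; b]; [rewrite Hmem eqxx ?orbT | in3t] ].
Qed.

End Geo4.

Close Scope ring_scope.


Section Comb.
Variable n : nat.
Implicit Types (T : {set {set 'I_n}}) (f : flip n) (e t : {set 'I_n}).

Definition present T e := exists2 t, t \in T & e \subset t.

Lemma two3 e (c d x : 'I_n) : c != d -> e \subset [set c; d; x] -> #|e| = 2 -> e != [set c; d] ->
  (e \subset [set x; c]) || (e \subset [set x; d]).
Proof.
move=> cd sE cE ne.
have xe : x \in e.
  case: (boolP (x \in e)) => // xe; exfalso; move/negP: ne; apply; rewrite eqEcard cE cards2 cd.
  apply/andP; split => //.
  apply/subsetP => z ze; have := subsetP sE z ze; rewrite !inE -orbA => /or3P [] /eqP ez;
    subst z; rewrite ?eqxx ?orbT //; by rewrite ze in xe.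
have nboth : ~~ ((c \in e) && (d \in e)).
  apply/negP => /andP [ce de]; move/negP: ne; apply; rewrite eq_sym eqEcard cE cards2 cd.
  apply/andP; split => //.
  by apply/subsetP => z; rewrite !inE => /orP [] /eqP ->.
case: (boolP (c \in e)) => ce.
  have dE : d \notin e by apply: contra nboth => ->; rewrite ce.
  apply/orP; left; apply/subsetP => z ze; have := subsetP sE z ze.
  rewrite !inE -orbA => /or3P [] /eqP ez; subst z; rewrite ?eqxx ?orbT //.
  by rewrite ze in dE.
apply/orP; right; apply/subsetP => z ze; have := subsetP sE z ze.
rewrite !inE -orbA => /or3P [] /eqP ez; subst z; rewrite ?eqxx ?orbT //.
by rewrite ze in ce.
Qed.

Lemma new_phi f t : t \in [set phi f :|: [set x] | x in eps f] -> phi f \subset t.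
Proof. by case/imsetP => x _ ->; apply: subsetUl. Qed.

Lemma perform_eps T f t : t \in perform T f -> eps f \subset t -> phi f \subset t.
Proof.
rewrite perform_in => /orP [/andP [_ /negbTE ->] //|].
by move=> /new_phi.
Qed.

Lemma perform_old T f t : t \in perform T f -> ~~ (phi f \subset t) -> t \in T.
Proof.
rewrite perform_in => /orP [/andP [-> _] //|] /new_phi ->; by [].
Qed.

Lemma perform_keep T f t : t \in T -> ~~ (eps f \subset t) -> t \in perform T f.
Proof. by move=> Ht ne; rewrite perform_in Ht ne. Qed.

Lemma perform_new T f t : t \in [set phi f :|: [set x] | x in eps f] -> t \in perform T f.
Proof. by move=> H; rewrite perform_in H orbT. Qed.

Lemma perform_commute T f g :
  (forall t, t \in [set phi g :|: [set x] | x in eps g] -> ~~ (eps f \subset t)) ->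
  (forall t, t \in [set phi f :|: [set x] | x in eps f] -> ~~ (eps g \subset t)) ->
  perform (perform T g) f = perform (perform T f) g.
Proof.
move=> A B; apply/setP => t; rewrite !perform_in.
case Ng: (t \in [set phi g :|: [set x] | x in eps g]).
  have := A t Ng; case: (eps f \subset t) => //= _; by rewrite !orbT andbT.
case Nf: (t \in [set phi f :|: [set x] | x in eps f]).
  have := B t Nf; case: (eps g \subset t) => //= _; by rewrite !orbT.
by rewrite !orbF andbAC.
Qed.

End Comb.


Lemma afterS n (T : {set {set 'I_n}}) (F : seq (flip n)) m : (m < size F)%N ->
  after T F m.+1 = perform (after T F m) (nth (f0 n) F m).
Proof. by move=> h; rewrite /after (take_nth (f0 n) h) foldl_rcons. Qed.

Lemma after0 n (T : {set {set 'I_n}}) (F : seq (flip n)) : after T F 0 = T.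
Proof. by rewrite /after take0. Qed.

Section Flip.
Variables (R : realFieldType) (n : nat) (p : 'I_n -> R * R).
Implicit Types (T : {set {set 'I_n}}) (f : flip n) (e t : {set 'I_n}).

Lemma sub_pair (a b c y : 'I_n) : y \in [set a; b] -> [set y; c] \subset [set a; b; c].
Proof.
rewrite !inE => /orP [] /eqP ->; apply/subsetP => w; rewrite !inE => /orP [] /eqP ->;
  by rewrite ?eqxx ?orbT.
Qed.

Lemma adm_facts T f : admissible p T f ->
  [/\ #|phi f| = 2, #|eps f| = 2 & present T (eps f)].
Proof.
case=> [a [b [c [d [Ee Hc Hd Ep q]]]]].
have [oc od ea eb] := quadP q.
have [ab ac bc] := ori_neq oc; have [cd ca da] := ori_neq ea.
split; first by rewrite Ep cards2 cd.
  by rewrite Ee cards2 ab.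
by exists [set a; b; c] => //; rewrite Ee subsetUl.
Qed.

Lemma pres_back T f e : admissible p T f -> present (perform T f) e -> #|e| = 2 ->
  e != phi f -> present T e.
Proof.
move=> Ha [t Ht sE] cE ne.
have Ha' := Ha; case: Ha' => [a [b [c [d [Ee Hc Hd Ep q]]]]].
have [oc od ea eb] := quadP q.
have [cd ca da] := ori_neq ea.
move: Ht; rewrite perform_in => /orP [/andP [Ht _] | Hn]; first by exists t.
have [y yab Et] : exists2 y, y \in [set a; b] & t = [set c; d; y].
  move: Hn; rewrite (new_in _ Ee Ep) => /orP [] /eqP ->;
    [exists a | exists b]; by rewrite ?inE ?eqxx ?orbT.
rewrite Et in sE; rewrite Ep in ne.
case/orP: (two3 cd sE cE ne) => s2.
  by exists [set a; b; c] => //; apply: subset_trans s2 (sub_pair _ yab).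
by exists [set a; b; d] => //; apply: subset_trans s2 (sub_pair _ yab).
Qed.

Lemma eps_gone T f : admissible p T f -> ~ present (perform T f) (eps f).
Proof.
move=> Ha [t Ht sE].
have Ha' := Ha; case: Ha' => [a [b [c [d [Ee Hc Hd Ep q]]]]].
have [oc od ea eb] := quadP q.
have [ab ac bc] := ori_neq oc; have [_ ad bd] := ori_neq od.
move: Ht; rewrite perform_in sE andbF /= (new_in _ Ee Ep) => Hn.
have [y yab Et] : exists2 y, y \in [set a; b] & t = [set c; d; y].
  move: Hn => /orP [] /eqP ->; [exists a | exists b]; by rewrite ?inE ?eqxx ?orbT.
move: sE; rewrite Ee Et => /subsetP sE.
have := sE a; rewrite !inE eqxx (negbTE ac) (negbTE ad) /= => /(_ isT) /eqP ay.
have := sE b; rewrite !inE eqxx orbT (negbTE bc) (negbTE bd) /= => /(_ isT) /eqP bY.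
by move: ab; rewrite ay bY eqxx.
Qed.

End Flip.


Section Seq.
Variables (R : realFieldType) (n : nat) (p : 'I_n -> R * R).
Variables (T0 : {set {set 'I_n}}) (F : seq (flip n)).
Hypotheses (HT0 : is_triangulation p T0) (HV : valid p T0 F).
Local Notation T_ m := (after T0 F m).
Local Notation fF m := (nth (f0 n) F m).

Lemma Ttri m : m <= size F -> is_triangulation p (T_ m).
Proof. by case: m => [|m] h; [rewrite after0 | exact: (HV h).2]. Qed.

Lemma adm m : m < size F -> admissible p (T_ m) (fF m).
Proof. by move=> h; exact: (HV h).1. Qed.

Lemma stepT m : m < size F -> T_ m.+1 = perform (T_ m) (fF m).
Proof. exact: afterS. Qed.

Lemma reappear (e : {set 'I_n}) j l : j <= l -> l <= size F -> #|e| = 2 -> present (T_ l) e ->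
  present (T_ j) e \/ exists q, j <= q < l /\ phi (fF q) = e.
Proof.
move=> jl ls cE; elim: l jl ls => [|l IH] jl ls Hp.
  by left; move: jl; rewrite leqn0 => /eqP ->.
case: (eqVneq j l.+1) => [-> | jl']; first by left.
have jl2 : j <= l by lia.
case: (eqVneq (phi (fF l)) e) => [Ep | ne].
  by right; exists l; split => //; lia.
have Hp' : present (T_ l) e.
  apply: (pres_back (adm (ls : l < size F))) => //; last by rewrite eq_sym.
  by rewrite -stepT.
case: (IH jl2 (ltnW ls) Hp') => [|[q [h1 h2]]]; first by left.
by right; exists q; split => //; lia.
Qed.

Section K.
Variables (k : nat) (hk : k < size F) (noin : forall i, ~ Defs.arc T0 F i k).
Variables (a b c d : 'I_n).
Hypotheses (Ee : eps (fF k) = [set a; b]) (Hc : [set a; b; c] \in T_ k)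
  (Hd : [set a; b; d] \in T_ k) (Ep : phi (fF k) = [set c; d]) (q : convex_quad p a b c d).

Lemma NoCreate m (t0 : {set 'I_n}) : m < k -> t0 \in T_ k -> [set a; b] \subset t0 -> ~~ (phi (fF m) \subset t0).
Proof.
move=> mk Ht0 sab; apply/negP => sE.
set e := phi (fF m) in sE.
have [cE _ _] := adm_facts (adm (ltn_trans mk hk)).
pose P := fun i => (m <= i < k) && (phi (fF i) == e).
have exP : exists i, P i by exists m; rewrite /P leqnn mk eqxx.
have ubP : forall i, P i -> i <= k by move=> i /andP [/andP [_ /ltnW ->]].
case: (ex_maxnP exP ubP) => i /andP [/andP [mi ik] /eqP Ei] imax.
apply: (noin (i := i)); split => //.
- case: (eqVneq e [set a; b]) => E; first by left; rewrite Ei E Ee.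
  right; split.
  + by rewrite Ei Ee.
  + by rewrite Ei.
  + by have [_ -> _] := adm_facts (adm hk).
  + by exists t0 => //; rewrite Ei // Ee.
- move=> q' iq qk; apply/eqP => Eq.
  have qs : q' < size F by lia.
  have gone := eps_gone (adm qs); rewrite -stepT // Eq Ei in gone.
  have Hpk : present (T_ k) e by exists t0.
  have [H | [q'' [h1 h2]]] := reappear (j := q'.+1) (l := k) qk (ltnW hk) cE Hpk.
    by apply: gone.
  have : P q'' by rewrite /P h2 eqxx andbT; apply/andP; split; lia.
  by move=> /imax; lia.
Qed.

Lemma ab_sub3 (z : 'I_n) : [set a; b] \subset [set a; b; z].
Proof. exact: subsetUl. Qed.

Lemma F1 (t0 : {set 'I_n}) : (t0 = [set a; b; c] \/ t0 = [set a; b; d]) ->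
  forall m, m <= k -> t0 \in T_ m.
Proof.
move=> Et.
have Ht0 : t0 \in T_ k by case: Et => ->.
have sab : [set a; b] \subset t0 by case: Et => ->; apply: ab_sub3.
have step : forall m, m < k -> t0 \in T_ m.+1 -> t0 \in T_ m.
  move=> m mk H; apply: (perform_old (f := fF m)); first by rewrite -stepT //; lia.
  exact: (NoCreate mk Ht0 sab).
have main : forall j, j <= k -> t0 \in T_ (k - j).
  elim=> [|j IH] jk; first by rewrite subn0.
  apply: step; first by lia.
  have -> : (k - j.+1).+1 = k - j by lia.
  by apply: IH; lia.
move=> m mk; have -> : m = k - (k - m) by lia.
by apply: main; lia.
Qed.

Lemma Hcm m : m <= k -> [set a; b; c] \in T_ m.
Proof. by apply: F1; left. Qed.
Lemma Hdm m : m <= k -> [set a; b; d] \in T_ m.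
Proof. by apply: F1; right. Qed.

Lemma cdneq : c != d.
Proof. have [_ _ ea _] := quadP q; by have [] := ori_neq ea. Qed.

Lemma abT m t : m <= k -> t \in T_ m -> a \in t -> b \in t ->
  t = [set a; b; c] \/ t = [set a; b; d].
Proof.
move=> mk Ht at_ bt.
exact: (abtri (Ttri (leq_trans mk (ltnW hk))) (Hcm mk) (Hdm mk) cdneq Ht at_ bt).
Qed.

Lemma Step5 m t0 : m < k -> (t0 = [set a; b; c] \/ t0 = [set a; b; d]) ->
  ~~ (eps (fF m) \subset t0).
Proof.
move=> mk Et; apply/negP => sE.
have Ht : t0 \in T_ m.+1 by apply: F1.
rewrite stepT in Ht; last by lia.
have := perform_eps Ht sE.
have Ht0 : t0 \in T_ k by apply: F1.
have sab : [set a; b] \subset t0 by case: Et => ->; apply: ab_sub3.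
by apply/negP; apply: (NoCreate mk Ht0 sab).
Qed.

Lemma Step5b m y : m < k -> y \in [set a; b] -> ~~ (eps (fF m) \subset [set c; d; y]).
Proof.
move=> mk yab; apply/negP => sE.
have ms : m < size F by lia.
have [_ cE [t Ht st]] := adm_facts (adm ms).
case: (eqVneq (eps (fF m)) [set c; d]) => E.
  rewrite E in st.
  apply: (noCD (Ttri (ltnW ms)) (Hcm (ltnW mk)) q Ht);
    by apply: (subsetP st); rewrite !inE eqxx ?orbT.
case/orP: (two3 cdneq sE cE E) => s2.
  by move/negP: (Step5 (t0 := [set a; b; c]) mk (or_introl erefl)); apply;
    apply: subset_trans s2 (sub_pair _ yab).
by move/negP: (Step5 (t0 := [set a; b; d]) mk (or_intror erefl)); apply;
  apply: subset_trans s2 (sub_pair _ yab).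
Qed.

Lemma Step6 m t : m < k -> t \in [set phi (fF m) :|: [set x] | x in eps (fF m)] ->
  ~~ ([set a; b] \subset t).
Proof.
move=> mk Hn; apply/negP => sab.
have Ht : t \in T_ m.+1 by rewrite stepT; [apply: perform_new | lia].
have [at_ bt] : a \in t /\ b \in t.
  by split; apply: (subsetP sab); rewrite !inE eqxx ?orbT.
have Et := abT (mk : m < k) Ht at_ bt.
have Ht0 : t \in T_ k by apply: F1.
by move/negP: (NoCreate mk Ht0 sab); apply; apply: new_phi.
Qed.

Definition u (x : nat) := if x < k then x else x.+1.
Definition F' := take k F ++ drop k.+1 F.
Definition T0' := perform T0 (fF k).

Lemma u_lt x : x < k -> u x = x.
Proof. by rewrite /u => ->. Qed.
Lemma u_ge x : k <= x -> u x = x.+1.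
Proof. by rewrite /u ltnNge => ->. Qed.

Lemma sizeF' : size F' = (size F).-1.
Proof. rewrite /F' size_cat size_take hk size_drop; lia. Qed.

Lemma nthF' x : nth (f0 n) F' x = fF (u x).
Proof.
rewrite /F' nth_cat size_take hk; case: (ltnP x k) => xk.
  by rewrite nth_take // u_lt.
by rewrite nth_drop u_ge //; congr nth; lia.
Qed.

Lemma afterF'1 m : m <= k -> after T0' F' m = perform (T_ m) (fF k).
Proof.
elim: m => [|m IH] mk; first by rewrite !after0.
rewrite afterS; last by rewrite sizeF'; lia.
rewrite IH; last by lia.
rewrite nthF' u_lt; last by lia.
rewrite perform_commute.
  by rewrite -stepT //; lia.
- move=> t; rewrite (new_in _ Ee Ep) => /orP [] /eqP ->;
    apply: Step5b; rewrite ?inE ?eqxx ?orbT //.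
- by move=> t Hn; rewrite Ee; apply: (Step6 (m := m)).
Qed.

Lemma afterF'2 m : k <= m -> m <= size F' -> after T0' F' m = T_ m.+1.
Proof.
elim: m => [|m IH] km ms.
  have k0 : k = 0 by lia.
  by rewrite -{1}k0 afterF'1 // k0 -stepT // -k0.
case: (eqVneq k m.+1) => [E | ne].
  by rewrite -{1}E afterF'1 // E -stepT // -E.
rewrite afterS; last by lia.
rewrite IH; [|lia|lia].
rewrite nthF' u_ge; last by lia.
by rewrite -stepT //; rewrite sizeF' in ms; lia.
Qed.

Lemma T0'tri : is_triangulation p T0'.
Proof.
have H0 := Hcm (leq0n k); have H1 := Hdm (leq0n k); rewrite after0 in H0 H1.
exact: (flip_tri HT0 Ee H0 H1 Ep q).
Qed.

Lemma validF' : valid p T0' F'.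
Proof.
move=> m ms; rewrite sizeF' in ms; split.
  case: (ltnP m k) => mk.
    rewrite afterF'1 ?(ltnW mk) // nthF' u_lt //.
    have [a' [b' [c' [d' [Ee' Hc' Hd' Ep' q']]]]] := adm (ltn_trans mk hk).
    exists a', b', c', d'; split => //; apply: perform_keep => //; rewrite Ee sub_ab;
      apply/negP => /andP [at_ bt]; [have Et := abT (ltnW mk) Hc' at_ bt
                                      | have Et := abT (ltnW mk) Hd' at_ bt];
      by move/negP: (Step5 mk Et); apply; rewrite Ee'; apply: subsetUl.
  rewrite afterF'2 //; last by rewrite sizeF'; lia.
  rewrite nthF' u_ge //; apply: adm; lia.
case: (ltnP m k) => mk.
  rewrite afterF'1 //; apply: (flip_tri _ Ee _ _ Ep q).
  - by apply: Ttri; lia.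
  - exact: Hcm.
  - exact: Hdm.
rewrite afterF'2; [by apply: Ttri; lia | lia | rewrite sizeF'; lia].
Qed.

Lemma finalF' : after T0' F' (size F') = T_ (size F).
Proof.
rewrite afterF'2 //; last by rewrite sizeF'; lia.
by rewrite sizeF'; congr after; lia.
Qed.

Lemma arcF' i j : Defs.arc T0' F' i j -> Defs.arc T0 F (u i) (u j).
Proof.
case=> ij js H3 H4; rewrite sizeF' in js.
have ui : forall x, u x = if x < k then x else x.+1 by [].
split.
- rewrite !ui; case: ifP => h1; case: ifP => h2; lia.
- rewrite ui; case: ifP => h1; lia.
- rewrite -!nthF'; case: H3 => [E|S]; first by left.
  right; case: (ltnP j k) => jk.
    rewrite afterF'1 in S; last exact: ltnW.
    rewrite u_lt //.
    case: S => ne c1 c2 [t Ht [s1 s2]]; split => //; exists t => //.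
    move: Ht; rewrite perform_in => /orP [/andP [Ht _] // | Hn].
    exfalso; move: Hn; rewrite (new_in _ Ee Ep) => /orP [] /eqP Et;
      move: s2; rewrite Et nthF' u_lt //; apply/negP; apply: Step5b;
      rewrite ?inE ?eqxx ?orbT //.
  rewrite afterF'2 in S; [ | exact: jk | rewrite sizeF'; lia].
  by rewrite u_ge.
- move=> r ir rj.
  case: (ltngtP r k) => rk.
  + have i_lt : i < k by move: ir; rewrite ui; case: ifP => h; lia.
    have := H4 r _ _; rewrite !nthF' u_lt //; apply.
      by move: ir; rewrite u_lt.
    by move: rj; rewrite ui; case: ifP => h; lia.
  + have := H4 r.-1 _ _; rewrite !nthF' (u_ge (x := r.-1)); last by lia.
    have -> : r.-1.+1 = r by lia.
    apply.
      by move: ir; rewrite ui; case: ifP => h; lia.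
    by move: rj; rewrite ui; case: ifP => h; lia.
  + subst r.
    have i_lt : i < k by move: ir; rewrite ui; case: ifP => h; lia.
    rewrite u_lt // Ee; apply/eqP => E.
    move/negP: (NoCreate i_lt Hc (ab_sub3 c)); apply; rewrite -E; exact: ab_sub3.
Qed.

End K.
End Seq.


Lemma after_cons n (T : {set {set 'I_n}}) (x : flip n) G m :
  after T (x :: G) m.+1 = after (perform T x) G m.
Proof. by []. Qed.

Lemma main_list (R : realFieldType) (n : nat) (p : 'I_n -> R * R) r :
  forall (T0 : {set {set 'I_n}}) (F : seq (flip n)) (idx : seq nat),
  size F = r -> is_triangulation p T0 -> valid p T0 F -> uniq idx -> size idx = size F ->
  all (fun x => x < size F) idx ->
  (forall i j, Defs.arc T0 F i j -> index i idx < index j idx) ->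
  valid p T0 (map (nth (f0 n) F) idx) /\
  after T0 (map (nth (f0 n) F) idx) (size F) = after T0 F (size F).
Proof.
elim: r => [|r IH] T0 F idx sF HT0 HV Hu Hs Ha Htop.
  move: Hs; rewrite sF; case: idx Hu Ha Htop => // _ _ _ _.
  by split; [move=> k; rewrite ltn0 | rewrite !after0].
case: idx Hu Hs Ha Htop => [|k idx'] /=; first by move=> _; rewrite sF.
move=> /andP [kn Hu'] Hs /andP [hk Ha'] Htop.
have Hs' : size idx' = r by move: Hs; rewrite sF; case.
have noin : forall i, ~ Defs.arc T0 F i k.
  by move=> i /Htop; rewrite eqxx ltn0.
have [a [b [c [d [Ee Hc Hd Ep q]]]]] := adm HV hk.
set F2 := F' F k.
set T2 := T0' T0 F k.
pose dd x := if x < k then x else x.-1.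
set idx2 := map dd idx'.
have uinj : injective (u k) by move=> x y; rewrite /u; case: ifP => h1; case: ifP => h2; lia.
have ud : forall x, x \in idx' -> u k (dd x) = x.
  move=> x xi; have xk : x != k by apply: contra kn => /eqP <-.
  rewrite /dd /u; case: (ltnP x k) => h1; first by rewrite h1.
  case: ifP => h2; lia.
have Eidx : map (u k) idx2 = idx'.
  by rewrite /idx2 -map_comp -[RHS]map_id; apply/eq_in_map => x /ud.
have sF2 : size F2 = r by rewrite /F2 (sizeF' hk Hc Hd) sF.
have [V2 A2] : valid p T2 (map (nth (f0 n) F2) idx2) /\
    after T2 (map (nth (f0 n) F2) idx2) (size F2) = after T2 F2 (size F2).
  apply: IH => //.
  - exact: (T0'tri HT0 HV hk noin Ee Hc Hd Ep q).
  - exact: (validF' HT0 HV hk noin Ee Hc Hd Ep q).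
  - by rewrite -(map_inj_uniq uinj) Eidx.
  - by rewrite size_map Hs' sF2.
  - apply/allP => x xi; rewrite sF2.
    have : u k x \in idx' by rewrite -Eidx map_f.
    move/(allP Ha'); rewrite sF /u; case: ifP => h; lia.
  - move=> i j /(arcF' HT0 HV hk noin Ee Hc Hd Ep q) /Htop.
    have uk : forall x, (k == u k x) = false by move=> x; apply/eqP; rewrite /u; case: ifP => h; lia.
    by rewrite !uk ltnS -Eidx !(index_map uinj).
have EG : map (nth (f0 n) F) idx' = map (nth (f0 n) F2) idx2.
  rewrite -Eidx -map_comp; apply: eq_map => x /=; by rewrite /F2 (nthF' hk Hc Hd).
rewrite EG; split.
  move=> m; case: m => [|m] /= hm.
    have H0 := Hcm HV hk noin Ee Hc Hd (leq0n k).
    have H1 := Hdm HV hk noin Ee Hc Hd (leq0n k).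
    rewrite after0 in H0 H1.
    split; first by rewrite after0; exists a, b, c, d; split.
    have := T0'tri HT0 HV hk noin Ee Hc Hd Ep q; rewrite /T0' /after /= take0 /=; by [].
  rewrite after_cons; have := V2 m; rewrite size_map; apply.
  by move: hm; rewrite size_map.
rewrite sF after_cons -{1}sF2 A2 /T2 /F2.
by rewrite (finalF' HT0 HV hk noin Ee Hc Hd Ep q) sF.
Qed.

Unset Implicit Arguments.


Theorem lemma1 (R : realFieldType) (n : nat) (p : 'I_n -> R * R)
  (T0 : {set {set 'I_n}}) (F : seq (flip n)) (s : {perm 'I_(size F)}) :
  injective p -> is_triangulation p T0 -> valid p T0 F ->
  topo_sort T0 F s ->
  valid p T0 (permuted F s) /\
  after T0 (permuted F s) (size F) = after T0 F (size F).
Proof.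
move=> _ HT0 HV Htop.
pose g := fun x : 'I_(size F) => val (s x).
have ginj : injective g by move=> x y /val_inj; exact: perm_inj.
set idx := [seq g x | x <- enum 'I_(size F)].
have -> : permuted F s = map (nth (f0 n) F) idx by rewrite /permuted /idx -map_comp.
apply: (main_list (r := size F)) => //.
- by rewrite /idx (map_inj_uniq ginj) enum_uniq.
- by rewrite size_map size_enum_ord.
- by apply/allP => x /mapP [y _ ->]; exact: ltn_ord.
move=> i j H; have [ij js _ _] := H.
have is_ : i < size F by lia.
have := Htop (Ordinal is_) (Ordinal js) H.
have idxE : forall (I : 'I_(size F)), index (val I) idx = val ((s^-1)%g I).
  by move=> I; rewrite -{1}(permKV s I) /idx -[val (s _)]/(g _) (index_map ginj) index_enum_ord.
by rewrite -(idxE (Ordinal is_)) -(idxE (Ordinal js)).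
Qed.
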